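(* Let $(A,\vee,\perp,0)$ be a quasi-orthomodular nearsemilattice. Then for every $p \in A$ the initial segment $[0,p] = \{x \in A : x \le p\}$ is an orthomodular lattice (with the induced order), and the joins and meets in $[0,p]$ agree with the corresponding joins and meets existing in $A$.
   Context: A nearsemilattice is a poset $A$ with least element $0$ in which any two elements having a common upper bound have a join; $x \vee y$ is the (partial) join, and we say $x \vee y$ is defined iff $x,y$ have a common upper bound. An orthogonality on a poset with least element $0$ is a binary relation $\perp$ such that: (i) $x \perp y$ implies $y \perp x$; (ii) $x \le y$ and $y \perp z$ imply $x \perp z$; (iii) $x \perp 0$ for all $x$. A quasi-orthomodular nearsemilattice is a nearsemilattice with an orthogonality $\perp$ such that: (a) if $x \perp y$ then $x \vee y$ is defined; (b) if $x \le y$ then $y = x \vee z$ for some $z$ with $x \perp z$; (c) if $x \perp y$, $x \perp z$ and $y \le x \vee z$, then $y \le z$. An orthomodular lattice is a bounded lattice with an orthocomplementation $x \mapsto x^-$ (an order-reversing involution with $x \vee x^- = 1$) such that, for the orthogonality $x \perp y$ iff $y \le x^-$, whenever $x \le y$ there is $z$ with $x \perp z$ and $y = x \vee z$. *)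

(* Defs.v *)
Set Implicit Arguments.

Section Defs.
Variable A : Type.
Variable le : A -> A -> Prop.

Definition is_join_in (P : A -> Prop) (x y z : A) : Prop :=
  P z /\ le x z /\ le y z /\
  (forall w, P w -> le x w -> le y w -> le z w).

Definition is_meet_in (P : A -> Prop) (x y z : A) : Prop :=
  P z /\ le z x /\ le z y /\
  (forall w, P w -> le w x -> le w y -> le w z).

Definition whole (_ : A) : Prop := True.

Definition is_poset : Prop :=
  (forall x, le x x) /\
  (forall x y, le x y -> le y x -> x = y) /\
  (forall x y z, le x y -> le y z -> le x z).

Definition is_nearsemilattice (bot : A) : Prop :=
  is_poset /\ (forall x, le bot x) /\
  (forall x y, (exists u, le x u /\ le y u) -> exists z, is_join_in whole x y z).

Definition is_orthogonality (bot : A) (perp : A -> A -> Prop) : Prop :=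
  (forall x y, perp x y -> perp y x) /\
  (forall x y z, le x y -> perp y z -> perp x z) /\
  (forall x, perp x bot).

Definition is_qom_nearsemilattice (bot : A) (perp : A -> A -> Prop) : Prop :=
  is_nearsemilattice bot /\ is_orthogonality bot perp /\
  (* (a) x ⊥ y implies x ∨ y is defined, i.e. x, y have a common upper bound *)
  (forall x y, perp x y -> exists u, le x u /\ le y u) /\
  (forall x y, le x y -> exists z, perp x z /\ is_join_in whole x z y) /\
  (forall x y z w, perp x y -> perp x z -> is_join_in whole x z w ->
     le y w -> le y z).

(* The subset P with the induced order is an orthomodular lattice with least
   element b and greatest element t: a bounded lattice with an
   orthocomplementation (order-reversing involution c with x ∨ c x = t)
   such that, for x ⊥' y :<-> y <= c x, whenever x <= y there is z with
   x ⊥' z and y = x ∨ z. *)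
Definition is_orthomodular_lattice_on (P : A -> Prop) (b t : A) : Prop :=
  P b /\ P t /\ (forall x, P x -> le b x /\ le x t) /\
  (forall x y, P x -> P y -> exists z, is_join_in P x y z) /\
  (forall x y, P x -> P y -> exists z, is_meet_in P x y z) /\
  exists compl : A -> A,
    (forall x, P x -> P (compl x)) /\
    (forall x y, P x -> P y -> le x y -> le (compl y) (compl x)) /\
    (forall x, P x -> compl (compl x) = x) /\
    (forall x, P x -> is_join_in P x (compl x) t) /\
    (forall x y, P x -> P y -> le x y ->
       exists z, P z /\ le z (compl x) /\ is_join_in P x z y).
End Defs.

(* Main.v *)
Require Import Defs.
From Stdlib Require Import ClassicalEpsilon.

Theorem theorem2 (A : Type) (le : A -> A -> Prop) (bot : A)
    (perp : A -> A -> Prop) :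
  is_qom_nearsemilattice le bot perp ->
  forall p : A,
    let I := fun x => le x p in
    is_orthomodular_lattice_on le I bot p /\
    (forall x y z, I x -> I y ->
       (is_join_in le I x y z <-> is_join_in le (@whole A) x y z)) /\
    (forall x y z, I x -> I y ->
       (is_meet_in le I x y z <-> is_meet_in le (@whole A) x y z)).
Proof.
  intros [[[Hrefl [Hanti Htrans]] [Hbot Hjoin]] [[Psym [Pdown Pbot]] [Ha [Hb Hc]]]] p I.
  assert (JW : forall x y z, I x -> I y -> is_join_in le (@whole A) x y z -> is_join_in le I x y z).
  { intros x y z Ix Iy [_ [h1 [h2 h3]]]. split. { apply h3; [exact Logic.I|exact Ix|exact Iy]. }
    split; [exact h1|split; [exact h2|]]. intros w _ w1 w2. apply h3; auto. exact Logic.I. }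
  assert (JEX : forall x y, I x -> I y -> exists z, is_join_in le (@whole A) x y z).
  { intros x y Ix Iy. apply Hjoin. exists p; auto. }
  assert (JI : forall x y z, I x -> I y -> is_join_in le I x y z -> is_join_in le (@whole A) x y z).
  { intros x y z Ix Iy Hz. destruct (JEX x y Ix Iy) as [j Hj].
    pose proof (JW _ _ _ Ix Iy Hj) as Hj'.
    destruct Hz as [Iz [z1 [z2 z3]]]. destruct Hj' as [Ij [j1 [j2 j3]]].
    assert (z = j) by (apply Hanti; auto). subst z. exact Hj. }
  assert (MI : forall x y z, I x -> I y -> is_meet_in le I x y z <-> is_meet_in le (@whole A) x y z).
  { intros x y z Ix Iy; split.
    - intros [Iz [h1 [h2 h3]]]. split;[exact Logic.I|split;[|split]]; auto.
      intros w _ w1 w2. apply h3; auto. unfold I; eauto.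
    - intros [_ [h1 [h2 h3]]]. split;[unfold I; eauto|split;[|split]]; auto.
      intros w _ w1 w2. apply h3; auto. exact Logic.I. }
  assert (JSYM : forall x y z, is_join_in le (@whole A) x y z -> is_join_in le (@whole A) y x z).
  { intros x y z [h0 [h1 [h2 h3]]]. split;[exact h0|split;[exact h2|split;[exact h1|]]].
    intros w Hw a b; auto. }
  set (Q := fun x z => perp x z /\ is_join_in le (@whole A) x z p).
  set (c := fun x => epsilon (inhabits bot) (Q x)).
  assert (cQ : forall x, I x -> Q x (c x)).
  { intros x Ix. unfold c. apply epsilon_spec. destruct (Hb x p Ix) as [z Hz]. exists z; exact Hz. }
  assert (QU : forall x z z', Q x z -> Q x z' -> z = z').
  { intros x z z' [h1 h2] [h1' h2']. apply Hanti.
    - eapply Hc; [exact h1|exact h1'|exact h2'|]. apply h2.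
    - eapply Hc; [exact h1'|exact h1|exact h2|]. apply h2'. }
  assert (cI : forall x, I x -> I (c x)).
  { intros x Ix. destruct (cQ x Ix) as [_ [_ [_ [h _]]]]. exact h. }
  assert (cc : forall x, I x -> c (c x) = x).
  { intros x Ix. symmetry. apply (QU (c x)); [|apply cQ; auto].
    destruct (cQ x Ix) as [h1 h2]. split; auto. }
  assert (crev : forall x y, I x -> I y -> le x y -> le (c y) (c x)).
  { intros x y Ix Iy Hxy. destruct (cQ x Ix) as [h1 h2]. destruct (cQ y Iy) as [k1 k2].
    eapply Hc; [| exact h1 | exact h2 |].
    - eapply Pdown; [exact Hxy| exact k1].
    - apply cI; auto. }
  split; [|split; [|exact MI]].
  2:{ intros x y z Ix Iy; split; auto. }
  split;[apply Hbot|split;[apply Hrefl|split;[|split;[|split]]]].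
  - intros x Ix; split; auto.
  - intros x y Ix Iy. destruct (JEX x y Ix Iy) as [z Hz]. exists z; auto.
  - intros x y Ix Iy.
    destruct (JEX (c x) (c y) (cI _ Ix) (cI _ Iy)) as [j Hj].
    pose proof (JW _ _ _ (cI _ Ix) (cI _ Iy) Hj) as [Ij [j1 [j2 j3]]].
    exists (c j). split; [apply cI; auto|split;[|split]].
    + rewrite <- (cc x Ix). apply crev; auto.
    + rewrite <- (cc y Iy). apply crev; auto.
    + intros w Iw w1 w2. rewrite <- (cc w Iw). apply crev; [exact Ij|apply cI; exact Iw|].
      apply j3; [apply cI; exact Iw|apply crev; auto|apply crev; auto].
  - exists c. split; [exact cI|split;[exact crev|split;[exact cc|split]]].
    + intros x Ix. apply JW; auto. apply cQ; auto.
    + intros x y Ix Iy Hxy. destruct (Hb x y Hxy) as [z [Hz1 Hz2]].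
      assert (Iz : I z). { unfold I. apply Htrans with y; auto. apply Hz2. }
      exists z. split; [exact Iz|split].
      * destruct (cQ x Ix) as [h1 h2]. eapply Hc; [exact Hz1|exact h1|exact h2|exact Iz].
      * apply JW; auto.
Qed.
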